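(* A linear $[n,k]$ MDS code $\mathcal C$ over $F$ is $2$-MDS if and only if, for every integer $w$ with $\max\{0,n-2k\}\le w\le n-k-3$ and every set $X\subseteq\{1,\dots,n\}$ of size $w$, the linear $[n-w,k]$ code obtained by puncturing $\mathcal C$ on $X$ is lightly-$2$-MDS.
   Context: $F=\mathrm{GF}(q)$; $\mathsf w(\cdot)$ is Hamming weight. A linear $[n,k]$ code is $2$-MDS if there do not exist three distinct vectors $e_0,e_1,e_2\in F^n$ in the same coset of the code with $\mathsf w(e_0)+\mathsf w(e_1)+\mathsf w(e_2)\le 2(n-k)$. The puncturing of $\mathcal C$ on $X$ is $\{(c_j)_{j\notin X}: c\in\mathcal C\}$. A linear $[n',k',d']$ code $\mathcal C'$ is lightly-$2$-MDS if there do not exist three nonzero vectors $e_0,e_1,e_2\in F^{n'}$, each of Hamming weight at most $d'-1$, in the same coset of $\mathcal C'$, with pairwise disjoint supports and $\mathsf w(e_0)+\mathsf w(e_1)+\mathsf w(e_2)\le 2(n'-k')$. *)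

(* Defs.v *)
From HB Require Import structures.
From mathcomp Require Import all_boot all_order all_algebra all_field.
Set Implicit Arguments. Unset Strict Implicit. Unset Printing Implicit Defensive.
Import GRing.Theory.
Local Open Scope ring_scope.

Section Codes.
Variable F : finFieldType.

Definition supp n (v : 'rV[F]_n) : {set 'I_n} := [set i | v 0 i != 0].
Definition wt n (v : 'rV[F]_n) : nat := #|supp v|.

(* minimum distance of a linear code (n+1 for the zero code, by convention) *)
Definition mindist n (C : {vspace 'rV[F]_n}) : nat :=
  \big[minn/n.+1]_(c : 'rV[F]_n | (c \in C) && (c != 0)) wt c.

(* C is an [n, \dim C] MDS code: d = n - k + 1, i.e. every nonzero
   codeword has weight >= n - k + 1 (Singleton bound gives the converse) *)
Definition isMDS n (C : {vspace 'rV[F]_n}) : Prop :=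
  forall c, c \in C -> c != 0 -> (n - \dim C + 1 <= wt c)%N.

Definition is2MDS n (C : {vspace 'rV[F]_n}) : Prop :=
  ~ exists e0 e1 e2 : 'rV[F]_n,
      [/\ [/\ e0 != e1, e1 != e2 & e0 != e2],
          e0 - e1 \in C, e1 - e2 \in C &
          (wt e0 + wt e1 + wt e2 <= 2 * (n - \dim C))%N].

Definition isLightly2MDS n (C : {vspace 'rV[F]_n}) : Prop :=
  ~ exists e0 e1 e2 : 'rV[F]_n,
      [/\ [/\ e0 != 0, e1 != 0 & e2 != 0],
          [/\ (wt e0 < mindist C)%N, (wt e1 < mindist C)%N & (wt e2 < mindist C)%N],
          e0 - e1 \in C /\ e1 - e2 \in C,
          [/\ [disjoint supp e0 & supp e1], [disjoint supp e1 & supp e2]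
            & [disjoint supp e0 & supp e2]] &
          (wt e0 + wt e1 + wt e2 <= 2 * (n - \dim C))%N].

(* puncturing on X: keep the coordinates outside X (in increasing order) *)
Definition punct_mx n (X : {set 'I_n}) : 'M[F]_(n, #|~: X|) :=
  \matrix_(i < n, j < #|~: X|) (i == enum_val j)%:R.

Definition puncture n (C : {vspace 'rV[F]_n}) (X : {set 'I_n})
  : {vspace 'rV[F]_#|~: X|} :=
  (linfun (mulmxr (punct_mx X)) @: C)%VS.

Lemma puncture_entry n (X : {set 'I_n}) (v : 'rV[F]_n) j :
  (v *m punct_mx X) 0 j = v 0 (enum_val j).
Proof.
rewrite !mxE (bigD1 (enum_val j)) //= mxE eqxx mulr1 big1 ?addr0 //.
by move=> i /negbTE ne; rewrite mxE ne mulr0.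
Qed.

End Codes.

(* Main.v *)
Require Import Defs.
From HB Require Import structures.
From mathcomp Require Import all_boot all_order all_algebra all_field.
From mathcomp Require Import zify.
Set Implicit Arguments. Unset Strict Implicit. Unset Printing Implicit Defensive.
Import GRing.Theory.
Local Open Scope ring_scope.

Section G.
Variable F : finFieldType.
Variable n : nat.
Implicit Types (v u : 'rV[F]_n).
Lemma supp0 : supp (0 : 'rV[F]_n) = set0.
Proof. by apply/setP=> i; rewrite !inE mxE eqxx. Qed.

Lemma wt_eq0 v : (wt v == 0%N) = (v == 0).
Proof.
apply/idP/idP; last first.
  by move/eqP->; rewrite /wt supp0 cards0.
rewrite /wt cards_eq0 => /eqP e; apply/eqP/rowP=> i; rewrite mxE.
apply/eqP; apply: contraT => h; have := in_set0 i; by rewrite -e inE h.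
Qed.

Lemma suppB v u : supp (v - u) \subset supp v :|: supp u.
Proof.
apply/subsetP=> i; rewrite !inE !mxE; apply: contraR.
by rewrite negb_or !negbK => /andP[/eqP-> /eqP->]; rewrite subrr.
Qed.


End G.

Section H.
Variable F : finFieldType.
Variable n : nat.
Implicit Types (X S : {set 'I_n}) (v : 'rV[F]_n).

Lemma linfun_punct X v : linfun (mulmxr (@punct_mx F n X)) v = v *m @punct_mx F n X.
Proof. by rewrite lfunE. Qed.

Lemma supp_punct X v :
  enum_val @: supp (v *m @punct_mx F n X) = supp v :\: X.
Proof.
apply/setP=> x; rewrite !inE; apply/imsetP/andP.
- case=> j; rewrite inE puncture_entry => nz ->; split=> //.
  by have := enum_valP j; rewrite inE.
- case=> xX nz; have Hx : x \in ~: X by rewrite inE.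
  exists (enum_rank_in Hx x); last by rewrite enum_rankK_in.
  by rewrite inE puncture_entry enum_rankK_in.
Qed.

Lemma wt_punct X v : wt (v *m @punct_mx F n X) = #|supp v :\: X|.
Proof. by rewrite /wt -supp_punct card_imset //; apply: enum_val_inj. Qed.

Lemma wt_split X v : wt v = (#|supp v :&: X| + #|supp v :\: X|)%N.
Proof. by rewrite /wt cardsID. Qed.

Lemma card_sum (A : {set 'I_n}) : #|A| = (\sum_i (i \in A : nat))%N.
Proof. by rewrite -sum1_card big_mkcond; apply: eq_bigr => i _; case: (i \in A). Qed.

Lemma mindist_lb m (C : {vspace 'rV[F]_n}) :
  (m <= n.+1)%N -> (forall c, c \in C -> c != 0 -> (m <= wt c)%N) ->
  (m <= mindist C)%N.
Proof.
move=> hm hc; rewrite /mindist; apply: (big_ind (fun x => m <= x)%N) => //.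
  by move=> x y hx hy; rewrite leq_min hx hy.
by move=> c /andP[] ; apply: hc.
Qed.

Lemma dim_le (C : {vspace 'rV[F]_n}) : (\dim C <= n)%N.
Proof. by have := dimvS (subvf C); rewrite dimvf /dim /= mul1n. Qed.

Lemma punct_ker (C : {vspace 'rV[F]_n}) X : isMDS C -> (#|X| <= n - \dim C)%N ->
  (C :&: lker (linfun (mulmxr (@punct_mx F n X))))%VS = 0%VS.
Proof.
move=> hM hX; apply/eqP; rewrite -subv0; apply/subvP => c /memv_capP[cC].
rewrite memv_ker linfun_punct memv0 => /eqP h; apply: contraT => nz.
have := hM c cC nz; rewrite (wt_split X) -wt_punct h.
rewrite /wt supp0 cards0 addn0 => h2.
have := subset_leq_card (subsetIr (supp c) X); lia.
Qed.

Lemma dim_punct (C : {vspace 'rV[F]_n}) X : isMDS C -> (#|X| <= n - \dim C)%N ->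
  \dim (puncture C X) = \dim C.
Proof. by move=> hM hX; rewrite /puncture limg_dim_eq // punct_ker. Qed.

Definition lift X (v : 'rV[F]_#|~: X|) : 'rV[F]_n := v *m (@punct_mx F n X)^T.

Lemma liftK X (v : 'rV[F]_#|~: X|) : lift v *m @punct_mx F n X = v.
Proof.
rewrite /lift -mulmxA; suff -> : (@punct_mx F n X)^T *m @punct_mx F n X = 1%:M by rewrite mulmx1.
apply/matrixP=> j j'; rewrite !mxE (bigD1 (enum_val j)) //= !mxE eqxx mul1r.
rewrite big1 ?addr0; first by rewrite (inj_eq enum_val_inj) eq_sym.
by move=> i /negbTE ne; rewrite !mxE ne mul0r.
Qed.

Lemma lift_X X (v : 'rV[F]_#|~: X|) i : i \in X -> lift v 0 i = 0.
Proof.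
move=> iX; rewrite /lift !mxE big1 // => j _; rewrite !mxE.
case: eqP => [e|]; last by rewrite mulr0.
by have := enum_valP j; rewrite inE -e iX.
Qed.

Lemma wt_lift X (v : 'rV[F]_#|~: X|) : wt (lift v) = wt v.
Proof.
rewrite (wt_split X) -wt_punct liftK.
suff -> : supp (lift v) :&: X = set0 by rewrite cards0.
apply/setP=> i; rewrite !inE; case iX: (i \in X); last by rewrite andbF.
by rewrite lift_X // eqxx.
Qed.


Section Comb.
Variables S0 S1 S2 : {set 'I_n}.
Definition cnt (j : 'I_n) : nat := ((j \in S0) + (j \in S1) + (j \in S2))%N.
Definition out X := (#|S0 :\: X| + #|S1 :\: X| + #|S2 :\: X|)%N.
Definition pw X := forall j, j \notin X -> (cnt j <= 1)%N.

Lemma out_le X : pw X -> (out X <= #|~: X|)%N.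
Proof.
move=> H; rewrite /out !card_sum -!big_split /=; apply: leq_sum => j _.
rewrite !inE; case hj: (j \in X) => /=; first by [].
have := H j; rewrite hj /cnt => /(_ isT).
by case: (j \in S0); case: (j \in S1); case: (j \in S2).
Qed.

Definition X0 := [set j | (2 <= cnt j)%N].

Lemma X0_pw : pw X0.
Proof. by move=> j; rewrite inE -ltnNge ltnS. Qed.

Lemma X0_out : (out X0 + 2 * #|X0| <= #|S0| + #|S1| + #|S2|)%N.
Proof.
rewrite /out !card_sum big_distrr /= -!big_split /=; apply: leq_sum => j _.
rewrite !inE /cnt.
by case: (j \in S0); case: (j \in S1); case: (j \in S2).
Qed.

Lemma grow X j : j \notin X -> j \in S0 :|: S1 :|: S2 ->
  ((out (j |: X)).+1 <= out X)%N.
Proof.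
move=> jX jS; rewrite /out !card_sum -!big_split /=.
rewrite (bigD1 j) // [X in (_ <= X)%N](bigD1 j) //= !inE eqxx /= (negbTE jX) /=.
rewrite -addSn; apply: leq_add.
  by move: jS; rewrite !inE; case: (j \in S0); case: (j \in S1); case: (j \in S2).
apply: leq_sum => i _; rewrite !inE.
by case: (i == j); case: (i \in X); case: (i \in S0); case: (i \in S1); case: (i \in S2).
Qed.

Lemma exists_X r k : 
  (forall X, pw X -> (out X + 2 * #|X| <= 2 * r)%N ->
     exists j, j \notin X /\ j \in S0 :|: S1 :|: S2) ->
  ((0 < n - 2 * k)%N -> (n + (n - 2 * k) <= 2 * r)%N) ->
  (out X0 + 2 * #|X0| <= 2 * r)%N ->
  exists X, [/\ pw X, (out X + 2 * #|X| <= 2 * r)%N & (n - 2 * k <= #|X|)%N].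
Proof.
move=> Hne Hr H0.
suff: forall m X, (n - 2 * k - #|X| <= m)%N -> pw X -> (out X + 2 * #|X| <= 2 * r)%N ->
  exists X, [/\ pw X, (out X + 2 * #|X| <= 2 * r)%N & (n - 2 * k <= #|X|)%N].
  by move=> /(_ _ X0 (leqnn _) X0_pw H0).
elim=> [|m IH] X hm hp ho.
  by exists X; split=> //; lia.
case: (leqP (n - 2 * k) #|X|) => hX; first by exists X.
have [j [jX jS]] := Hne X hp ho.
apply: (IH (j |: X)).
- rewrite cardsU1 jX; lia.
- by move=> i; rewrite !inE negb_or => /andP[_]; apply: hp.
- have := Hr (leq_ltn_trans (leq0n _) hX).
  have := grow jX jS; have := out_le hp; have := cardsC X; rewrite card_ord cardsU1 jX.
  lia.
Qed.
End Comb.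


Lemma wtB_le X u v :
  (wt (u - v) <= #|X| + #|supp u :\: X| + #|supp v :\: X|)%N.
Proof.
rewrite (wt_split X) -addnA leq_add ?subset_leq_card ?subsetIr //.
rewrite -cardsUI; apply: leq_trans (leq_addr _ _); apply: subset_leq_card.
apply/subsetP=> i /setDP [hi iX].
by move: (subsetP (suppB u v) i hi); rewrite !in_setU !in_setD iX.
Qed.

Lemma disj_punct X u v :
  (forall j, j \notin X -> ~~ ((j \in supp u) && (j \in supp v))) ->
  [disjoint supp (u *m @punct_mx F n X) & supp (v *m @punct_mx F n X)].
Proof.
move=> H; rewrite disjoint_subset; apply/subsetP => j.
rewrite !inE !puncture_entry => hu; apply/negP => hv.
have jX : enum_val j \notin X by have := enum_valP j; rewrite inE.
by have := H _ jX; rewrite !inE hu hv.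
Qed.

End H.

Lemma neq_disj (F : finFieldType) m (u v : 'rV[F]_m) : u != 0 -> [disjoint supp u & supp v] -> u != v.
Proof.
move=> nz hd; apply: contraNneq nz => E; rewrite -wt_eq0 /wt cards_eq0.
apply/eqP/setP => i; rewrite in_set0; case hi: (i \in supp u) => //.
by move: (disjointFr hd hi); rewrite -E hi.
Qed.

Unset Implicit Arguments.
Set Strict Implicit.
Theorem mainTheorem15 (F : finFieldType) (n k : nat)
    (C : {vspace 'rV[F]_n}) :
  \dim C = k -> isMDS C ->
  (is2MDS C <->
   forall w : nat, (n - 2 * k <= w)%N -> (w + k + 3 <= n)%N ->
     forall X : {set 'I_n}, #|X| = w -> isLightly2MDS (puncture C X)).
Proof.
move=> hk hM; have kn := dim_le C; have kn' : (k <= n)%N by rewrite -hk.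
split.
- move=> h2 w hw1 hw2 X hX [e0 [e1 [e2 [[n0 n1 n2] _ [d01 d12] [dj01 dj12 dj02] hs]]]].
  apply: h2.
  have hd : \dim (puncture C X) = k by rewrite dim_punct // hX hk; clear -hw2; lia.
  have hn' : #|~: X| = (n - w)%N by have := cardsC X; rewrite card_ord hX; clear; lia.
  move: d01 => /memv_imgP [c01 c01C]; rewrite linfun_punct => e01.
  move: d12 => /memv_imgP [c12 c12C]; rewrite linfun_punct => e12.
  have p1 : lift e1 *m @punct_mx F n X = e1 by apply: liftK.
  have p0 : (lift e1 + c01) *m @punct_mx F n X = e0.
    by rewrite mulmxDl p1 -e01 addrC subrK.
  have p2 : (lift e1 - c12) *m @punct_mx F n X = e2.
    by rewrite mulmxBl p1 -e12 opprB addrC subrK.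
  have ne01 := neq_disj n0 dj01.
  have ne12 := neq_disj n1 dj12.
  have ne02 := neq_disj n0 dj02.
  exists (lift e1 + c01), (lift e1), (lift e1 - c12); split.
  + split.
    * by apply: contraNneq ne01 => E; apply/eqP; rewrite -p0 E p1.
    * by apply: contraNneq ne12 => E; apply/eqP; rewrite -p2 -E p1.
    * by apply: contraNneq ne02 => E; apply/eqP; rewrite -p0 -p2 E.
  + by rewrite addrAC subrr add0r.
  + by rewrite opprB addrC subrK.
  + have w0 : (wt (lift e1 + c01) <= w + wt e0)%N.
      rewrite (wt_split X) -wt_punct p0 leq_add2r -hX.
      by apply: subset_leq_card; apply: subsetIr.
    have w2 : (wt (lift e1 - c12) <= w + wt e2)%N.
      rewrite (wt_split X) -wt_punct p2 leq_add2r -hX.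
      by apply: subset_leq_card; apply: subsetIr.
    have w1 := wt_lift e1.
    move: hs; rewrite hd hk => hs; clear -hs hn' w0 w1 w2 hw2; lia.
- move=> H [e0 [e1 [e2 [[n01 n12 n02] d01 d12 hs]]]].
  have d02 : e0 - e2 \in C by have := memvD d01 d12; rewrite addrA subrK.
  have m01 := hM _ d01; rewrite subr_eq0 in m01; have {}m01 := m01 n01.
  have m12 := hM _ d12; rewrite subr_eq0 in m12; have {}m12 := m12 n12.
  have m02 := hM _ d02; rewrite subr_eq0 in m02; have {}m02 := m02 n02.
  rewrite hk in m01 m12 m02 hs.
  pose S0 := supp e0; pose S1 := supp e1; pose S2 := supp e2.
  have Hne : forall X, pw S0 S1 S2 X -> (out S0 S1 S2 X + 2 * #|X| <= 2 * (n - k))%N ->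
     exists j, j \notin X /\ j \in S0 :|: S1 :|: S2.
    move=> X hp ho.
    case: (boolP [exists j, (j \notin X) && (j \in S0 :|: S1 :|: S2)]).
      by case/existsP => j /andP[]; exists j.
    move/existsPn => hn.
    have z : forall S : {set 'I_n}, S \subset S0 :|: S1 :|: S2 -> #|S :\: X| = 0%N.
      move=> S hS; apply/eqP; rewrite cards_eq0; apply/eqP/setP => i.
      rewrite in_set0; apply/negP => /setDP [iS iX].
      by have := hn i; rewrite iX (subsetP hS _ iS).
    have z0 : #|S0 :\: X| = 0%N by apply: z; rewrite -setUA subsetUl.
    have z1 : #|S1 :\: X| = 0%N.
      by apply: z; rewrite -setUA; apply: subset_trans (subsetUr _ _); apply: subsetUl.
    exfalso; have := wtB_le X e0 e1; rewrite -/S0 -/S1 z0 z1; move: ho.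
move=> h1 h2; have h3 := leq_trans m01 h2; clear -h1 h3; lia.
  have Hr : (0 < n - 2 * k)%N -> (n + (n - 2 * k) <= 2 * (n - k))%N by clear -kn'; lia.
  have H0 : (out S0 S1 S2 (X0 S0 S1 S2) + 2 * #|X0 S0 S1 S2| <= 2 * (n - k))%N.
    by apply: leq_trans (X0_out _ _ _) _.
  have [X [hp ho hX]] := exists_X Hne Hr H0.
  have b01 := wtB_le X e0 e1; have b12 := wtB_le X e1 e2; have b02 := wtB_le X e0 e2.
  have ol := out_le hp; have cX := cardsC X; rewrite card_ord in cX.
  move: ho b01 b12 b02 ol; rewrite /out /S0 /S1 /S2 => ho b01 b12 b02 ol.
  set a0 := #|supp e0 :\: X| in ho b01 b12 b02 m01 m12 m02 ol cX hX *; set a1 := #|supp e1 :\: X| in ho b01 b12 b02 m01 m12 m02 ol cX hX *.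
  set a2 := #|supp e2 :\: X| in ho b01 b12 b02 m01 m12 m02 ol cX hX *; set w := #|X| in ho b01 b12 b02 m01 m12 m02 ol cX hX *.
  set x01 := wt (e0 - e1) in ho b01 b12 b02 m01 m12 m02 ol cX hX *; set x12 := wt (e1 - e2) in ho b01 b12 b02 m01 m12 m02 ol cX hX *; set x02 := wt (e0 - e2) in ho b01 b12 b02 m01 m12 m02 ol cX hX *.
  have hw2 : (w + k + 3 <= n)%N by clear -ho b01 b12 b02 m01 m12 m02; lia.
  have hd : \dim (puncture C X) = k by rewrite dim_punct // hk; clear -hw2; lia.
  apply: (H w hX hw2 X erefl).
  exists (e0 *m @punct_mx F n X), (e1 *m @punct_mx F n X), (e2 *m @punct_mx F n X).
  rewrite !wt_punct hd -/a0 -/a1 -/a2.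
  have mdl : forall a, (a + w + k <= n)%N -> (a < mindist (puncture C X))%N.
    move=> a ha; apply: mindist_lb; first by clear -ha cX; lia.
    move=> c /memv_imgP [c0 c0C]; rewrite linfun_punct => -> nz.
    have nz0 : c0 != 0 by apply: contraNneq nz => ->; rewrite mul0mx.
    have := hM _ c0C nz0; rewrite hk (wt_split X) -wt_punct.
    have := subset_leq_card (subsetIr (supp c0) X); rewrite -/w => h1 h2; clear -h1 h2 ha; lia.
  have pwX : forall j, j \notin X -> [/\ ~~ ((j \in S0) && (j \in S1)),
       ~~ ((j \in S1) && (j \in S2)) & ~~ ((j \in S0) && (j \in S2))].
    move=> j jX; have := hp j jX; rewrite /cnt.
    by case: (j \in S0); case: (j \in S1); case: (j \in S2).
  split.
  + split; rewrite -wt_eq0 wt_punct; apply/eqP; clear -ho b01 b12 b02 m01 m12 m02; lia.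
  + split; apply: mdl; clear -ho b01 b12 b02 m01 m12 m02; lia.
  + split; rewrite -mulmxBl -linfun_punct; exact: memv_img.
  + split; apply: disj_punct => j jX; by case: (pwX j jX).
  + clear -ho cX; lia.
Qed.
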